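(* Let $T$ be the rooted binary tree with boundary $\partial T=\{0,1\}^{\mathbb N}$, let $\mu_1$ be the Bernoulli measure on $\partial T$, and let $\lambda$ be Lebesgue measure on $I=[0,1)$. Let $g\in Aut(T)$ be such that there exists $m\geq1$ such that for every $i>m$ and every sequence $w=w_1w_2\cdots\in\partial T$, the $i$-th entry of $g(w)$ equals $w_i$. Let $a\in Aut(T)$ be the adding machine. Then: (1) for some permutation $\pi$ of $2^m$ symbols, the rotated odometer $(I,F_\pi)$ (with $F_\pi$ built from the division of $I$ into $2^m$ intervals of length $2^{-m}$) admits an injective measure-preserving map $\phi:(I,\lambda)\to(\partial T,\mu_1)$ with $\phi\circ F_\pi=(a\circ g)\circ\phi$; (2) consequently, $a\circ g$ has infinite order, there is a clopen subset $U\subset\partial T$ such that the action of $\langle a\circ g\rangle$ restricted to $U$ is minimal, and there is $n_0\geq0$ such that every $x\in\partial T\setminus U$ is periodic of period $2^k$ for some $k\leq n_0$.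
   Context: The rooted binary tree $T$ has vertex levels $V_i$, $|V_i|=2^i$, vertices of $V_i$ labelled by words $w_1\cdots w_i\in\{0,1\}^i$, with $w_1\cdots w_i$ joined to $w_1\cdots w_i0$ and $w_1\cdots w_i1$. Its boundary $\partial T$ is the set of infinite paths, identified with $\{0,1\}^{\mathbb N}$. $Aut(T)$ is the group of bijections of vertices preserving adjacency (hence levels); each induces a homeomorphism of $\partial T$. The Bernoulli measure $\mu_1$ gives each cylinder $[w_1\cdots w_i]$ mass $2^{-i}$. The adding machine $a$ is addition of $1$ with carry to the right: $a(0w_2\cdots)=1w_2\cdots$; if $w_1=\cdots=w_k=1$, $w_{k+1}=0$ then $a(w)=0^k1w_{k+2}\cdots$; $a(1^\infty)=0^\infty$. Rotated odometer: the von Neumann–Kakutani map $\mathfrak{a}:[0,1)\to[0,1)$ is $\mathfrak{a}(x)=x-(1-3\cdot2^{-n})$ for $x\in[1-2^{1-n},1-2^{-n})$, $n\ge1$; for $q\in\mathbb N$ and a permutation $\pi$ of $q$ symbols, $R_\pi$ translates $[k/q,(k+1)/q)$ onto $[\pi(k)/q,(\pi(k)+1)/q)$; $F_\pi=\mathfrak{a}\circ R_\pi$. *)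

(* Defs.v *)
From HB Require Import structures.
From mathcomp Require Import all_boot all_order all_algebra all_fingroup.
From mathcomp Require Import all_classical all_reals all_analysis.
Set Implicit Arguments. Unset Strict Implicit. Unset Printing Implicit Defensive.
Import Order.TTheory GRing.Theory Num.Theory.
Import numFieldNormedType.Exports.
Local Open Scope classical_set_scope.
Local Open Scope ring_scope.

(* Vertices of T are finite binary words (seq bool); the word w_1...w_i is
   the list [:: w_1; ...; w_i], its level is its size, and w is joined to
   rcons w b for b in {0,1} (false = 0, true = 1). *)
Definition tree_adj (u v : seq bool) : Prop :=
  (exists b, v = rcons u b) \/ (exists b, u = rcons v b).

Definition is_tree_aut (f : seq bool -> seq bool) : Prop :=
  bijective f /\ forall u v, tree_adj u v <-> tree_adj (f u) (f v).

(* An infinite path is a sequence x : nat -> bool, with x i the (i+1)-th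
   letter (so the paper's w_i is x (i-1)).  We use mathcomp-analysis'
   cantor_space (= nat -> bool with the product topology). *)
Definition prefix (x : cantor_space) (n : nat) : seq bool := mkseq x n.

Definition bd_act (f : seq bool -> seq bool) (x : cantor_space) : cantor_space :=
  fun i => nth false (f (prefix x i.+1)) i.

(* The adding machine a: addition of 1 with carry to the right. *)
Definition adding_machine (x : cantor_space) : cantor_space :=
  fun i => if [forall j : 'I_i, x j] then ~~ x i else x i.

Definition cylinder (w : seq bool) : set cantor_space :=
  [set x | prefix x (size w) = w].

Definition cylinders : set (set cantor_space) := [set cylinder w | w in [set: seq bool]].

(* dT as a measurable space: the sigma-algebra generated by cylinders
   (= Borel sigma-algebra of the product topology). *)
Definition bdT := g_sigma_algebraType cylinders.

(* mu is the Bernoulli measure mu_1: each cylinder [w] has mass 2^-|w|.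
   (This determines mu uniquely.) *)
Definition is_bernoulli_measure (R : realType)
  (mu : {measure set bdT -> \bar R}) : Prop :=
  forall w : seq bool, mu (cylinder w) = ((2%:R : R) ^- size w)%:E.

Definition vNK_level (R : realType) (x : R) (n : nat) : Prop :=
  (1 <= n)%N /\ 1 - (2%:R : R) ^- n.-1 <= x /\ x < 1 - (2%:R : R) ^- n.

Definition vNK_index (R : realType) (x : R) : nat := xget 1%N (vNK_level x).

Definition vNK (R : realType) (x : R) : R :=
  x - (1 - 3%:R * (2%:R : R) ^- vNK_index x).

Definition rot_pi (R : realType) (q : nat) (pi : {perm 'I_q}) (x : R) : R :=
  let k := Num.truncn (x * q%:R) in
  match @insub _ (fun k => (k < q)%N) 'I_q k with
  | Some i => x + ((pi i)%:R - k%:R) / q%:R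
  | None => x
  end.

Definition rot_odometer (R : realType) (q : nat) (pi : {perm 'I_q}) (x : R) : R :=
  vNK (rot_pi pi x).

(* the <h>-orbit of x, for a bijection h: { h^k x | k in Z } *)
Definition zorbit (T : Type) (h : T -> T) (x : T) : set T :=
  [set y | exists n : nat, y = iter n h x \/ x = iter n h y].

Definition has_period (T : Type) (h : T -> T) (x : T) (p : nat) : Prop :=
  (0 < p)%N /\ iter p h x = x /\ forall j, (0 < j < p)%N -> iter j h x <> x.

(* Main.v *)
Require Import Defs.
From HB Require Import structures.
From mathcomp Require Import all_boot all_order all_algebra all_fingroup.
From mathcomp Require Import all_classical all_reals all_analysis.
From mathcomp Require Import zify ring lra.
Import Order.TTheory GRing.Theory Num.Theory.
Import numFieldNormedType.Exports.
Local Open Scope classical_set_scope.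
Set Implicit Arguments. Unset Strict Implicit. Unset Printing Implicit Defensive.
Local Open Scope nat_scope.
Local Notation prefix := Defs.prefix.


Lemma prefixP (x y : cantor_space) n :
  prefix x n = prefix y n <-> (forall i, i < n -> x i = y i).
Proof.
split.
- move=> e i lt; have := congr1 (fun s => nth false s i) e.
  by rewrite /= /Defs.prefix !nth_mkseq.
- move=> h; rewrite /Defs.prefix /mkseq; apply/eq_in_map => i.
  rewrite mem_iota add0n => /andP[_ lt]; exact: h.
Qed.

Lemma prefixW (x y : cantor_space) n k : k <= n ->
  prefix x n = prefix y n -> prefix x k = prefix y k.
Proof.
move=> kn /prefixP h; apply/prefixP => i ik; apply: h; exact: leq_trans ik kn.
Qed.

Lemma size_prefix (x : cantor_space) n : size (prefix x n) = n.
Proof. by rewrite size_mkseq. Qed.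

Lemma prefixS (x : cantor_space) n : prefix x n.+1 = rcons (prefix x n) (x n).
Proof. exact: mkseqS. Qed.

Definition auto_like (f : cantor_space -> cantor_space) :=
  exists s : seq bool -> bool, forall x n, f x n = x n (+) s (prefix x n).

Lemma auto_local f : auto_like f -> forall x y n,
  prefix x n = prefix y n -> prefix (f x) n = prefix (f y) n.
Proof.
move=> [s hs] x y n /prefixP e; apply/prefixP => i ilt.
rewrite !hs e //; congr (_ (+) s _); apply/prefixP => j ji.
apply: e; exact: ltn_trans ji ilt.
Qed.

Lemma auto_comp f1 f2 : auto_like f1 -> auto_like f2 -> auto_like (f2 \o f1).
Proof.
move=> [s1 h1] [s2 h2].
pose P1 (w : seq bool) := mkseq (fun i => nth false w i (+) s1 (take i w)) (size w).
have eP x n : prefix (f1 x) n = P1 (prefix x n).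
  rewrite /P1 size_prefix /Defs.prefix /mkseq; apply/eq_in_map => i.
  rewrite mem_iota add0n => /andP[_ lt].
  rewrite h1 (nth_map 0) ?size_iota // nth_iota // add0n; congr (_ (+) s1 _).
  rewrite /Defs.prefix /mkseq -map_take take_iota; congr (map _ (iota _ _)); lia.
exists (fun w => s1 w (+) s2 (P1 w)) => x n /=.
by rewrite h2 h1 eP addbA.
Qed.

Lemma auto_iter f n : auto_like f -> auto_like (iter n f).
Proof.
move=> af; elim: n => [|n IH] /=.
  by exists (fun _ => false) => x k; rewrite addbF.
have [s hs] := auto_comp IH af; exists s => x k; exact: hs.
Qed.

Lemma auto_pow2 f : auto_like f -> forall n x, prefix (iter (2 ^ n) f x) n = prefix x n.
Proof.
move=> af; elim=> [|n IH] x; first by [].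
have [s hs] := auto_iter (2 ^ n) af.
rewrite expnS mul2n -addnn iterD !prefixS IH IH; congr rcons.
by rewrite hs hs IH -addbA addbb addbF.
Qed.

Lemma tree_aut_struct g : is_tree_aut g ->
  (forall u b, exists c, g (rcons u b) = rcons (g u) c) /\
  (forall u, size (g u) = size u).
Proof.
move=> [[g' gK g'K] adj].
have ginj : injective g := can_inj gK.
have nb v : tree_adj v [::] -> exists c, v = [:: c].
  case=> [[c e]|[c e]]; last by exists c.
  by have := congr1 size e; rewrite size_rcons.
have g0 : g [::] = [::].
  case/lastP E: (g [::]) => [//|u b].
  have a1 : tree_adj (g (g' u)) (g [::]) by rewrite g'K E; left; exists b.
  have a2 : tree_adj (g (g' (rcons (rcons u b) false))) (g [::]).
    by rewrite g'K E; right; exists false.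
  have a3 : tree_adj (g (g' (rcons (rcons u b) true))) (g [::]).
    by rewrite g'K E; right; exists true.
  have [c1 e1] := nb _ (proj2 (adj _ _) a1).
  have [c2 e2] := nb _ (proj2 (adj _ _) a2).
  have [c3 e3] := nb _ (proj2 (adj _ _) a3).
  have f1 : g [:: c1] = u by rewrite -e1 g'K.
  have f2 : g [:: c2] = rcons (rcons u b) false by rewrite -e2 g'K.
  have f3 : g [:: c3] = rcons (rcons u b) true by rewrite -e3 g'K.
  have n12 : c1 != c2.
    apply/eqP => e; have := congr1 size f1; rewrite e f2 !size_rcons; lia.
  have n13 : c1 != c3.
    apply/eqP => e; have := congr1 size f1; rewrite e f3 !size_rcons; lia.
  have n23 : c2 != c3.
    apply/eqP => e; have := f2; rewrite e f3 => /rcons_inj [].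
    by [].
  by move: n12 n13 n23; clear; case: c1; case: c2; case: c3.
have child : forall u b, exists c, g (rcons u b) = rcons (g u) c.
  elim/last_ind => [|w d IH] b.
  - have : tree_adj (g [::]) (g (rcons [::] b)) by apply: (proj1 (adj _ _)); left; exists b.
    rewrite g0 => -[[c e]|[c e]]; first by exists c.
    by have := congr1 size e; rewrite size_rcons.
  - have : tree_adj (g (rcons w d)) (g (rcons (rcons w d) b)).
      by apply: (proj1 (adj _ _)); left; exists b.
    case=> [[c e]|[c e]]; first by exists c.
    have [d' ed] := IH d; rewrite ed in e.
    move/rcons_inj: e => [/ginj ew _].
    by have := congr1 size ew; rewrite !size_rcons; lia.
split => //; elim/last_ind => [|u b IH]; first by rewrite g0.
by have [c ->] := child u b; rewrite !size_rcons IH.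
Qed.

Lemma bd_act_prefix g : is_tree_aut g ->
  forall x n, prefix (bd_act g x) n = g (prefix x n).
Proof.
move=> /tree_aut_struct [child sz] x; elim=> [|n IH].
  by have := sz [::]; move/size0nil.
rewrite prefixS IH /bd_act prefixS.
have [c ->] := child (prefix x n) (x n).
by rewrite nth_rcons sz size_prefix ltnn eqxx.
Qed.

Lemma bd_act_auto g : is_tree_aut g -> auto_like (bd_act g).
Proof.
move=> ga; have [child sz] := tree_aut_struct ga.
have ginj : injective g by case: ga => -[g' gK _] _; exact: can_inj gK.
exists (fun u => nth false (g (rcons u false)) (size u)) => x n.
rewrite /bd_act prefixS.
have [c1 e1] := child (prefix x n) (x n).
have [c0 e0] := child (prefix x n) false.
rewrite e1 e0 !nth_rcons !sz size_prefix ltnn eqxx.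
case E: (x n) e1 => e1 /=.
- case: c1 e1 => e1; case: c0 e0 => e0 //;
    have : g (rcons (prefix x n) true) = g (rcons (prefix x n) false) by rewrite e1 e0.
  + by move/ginj/rcons_inj => [].
  + by move/ginj/rcons_inj => [].
- by move: e1; rewrite e0 => /rcons_inj [].
Qed.

Lemma forall_prefix (x : cantor_space) i :
  [forall j : 'I_i, x j] = all id (prefix x i).
Proof.
apply/forallP/allP => [h b /mapP[j]|h j].
- rewrite mem_iota add0n => /andP[_ ji] ->; exact: (h (Ordinal ji)).
- apply: h; apply/mapP; exists (nat_of_ord j) => //.
  by rewrite mem_iota add0n ltn_ord.
Qed.

Lemma am_auto : auto_like adding_machine.
Proof.
exists (fun w => all id w) => x n; rewrite /adding_machine forall_prefix.
by case: (all _ _); case: (x n).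
Qed.

Definition tl m (x : cantor_space) : cantor_space := fun k => x (m + k).

Lemma prefix_cat (x : cantor_space) m k :
  prefix x (m + k) = prefix x m ++ prefix (tl m x) k.
Proof.
rewrite /Defs.prefix /mkseq iotaD map_cat add0n; congr (_ ++ _).
by rewrite -{1}(addn0 m) iotaDl -map_comp.
Qed.


Section Dyn.
Variables (H : cantor_space -> cantor_space) (m : nat) (ws : seq bool).
Hypothesis HA : auto_like H.
Hypothesis Hws : size ws = m.
Hypothesis HT : forall x, tl m (H x) =
  if prefix x m == ws then adding_machine (tl m x) else tl m x.

Local Notation P x := (prefix x m).

Lemma L1 n x y : P x = P y -> P (iter n H x) = P (iter n H y).
Proof. by move=> e; apply: (auto_local (auto_iter n HA)). Qed.

Lemma L2 x : P (iter (2 ^ m) H x) = P x.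
Proof. exact: auto_pow2. Qed.

Lemma L3 k x : P (iter (2 ^ m * k) H x) = P x.
Proof.
elim: k x => [|k IH] x; first by rewrite muln0.
by rewrite mulnS iterD L2 IH.
Qed.

Lemma per_ex x : exists n, (0 < n) && (P (iter n H x) == P x).
Proof. by exists (2 ^ m); rewrite expn_gt0 /= L2 eqxx. Qed.

Definition per x := ex_minn (per_ex x).

Lemma per_spec x : [/\ 0 < per x, P (iter (per x) H x) = P x &
  forall n, 0 < n -> P (iter n H x) = P x -> per x <= n].
Proof.
rewrite /per; case: ex_minnP => p /andP[p0 /eqP e] min; split => // n n0 en.
by apply: min; rewrite n0 en eqxx.
Qed.

Lemma iter_mul x p q : P (iter p H x) = P x -> P (iter (q * p) H x) = P x.
Proof.
move=> e; elim: q => [|q IH] //; rewrite mulSn iterD.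
by rewrite (L1 p IH) e.
Qed.

Lemma per_mod x n : P (iter n H x) = P (iter (n %% per x) H x).
Proof.
have [p0 e _] := per_spec x.
rewrite {1}(divn_eq n (per x)) addnC iterD.
exact: L1 (iter_mul _ e).
Qed.

Lemma per_dvd x : per x %| 2 ^ m.
Proof.
have [p0 e min] := per_spec x.
case r0: (2 ^ m %% per x) => [|r]; first by rewrite /dvdn r0.
have : P (iter r.+1 H x) = P x by rewrite -r0 -per_mod L2.
move/(min _ (ltn0Sn r)); have := ltn_pmod (2 ^ m) p0; rewrite r0; lia.
Qed.

Lemma per_inj x i j : i < per x -> j < per x ->
  P (iter i H x) = P (iter j H x) -> i = j.
Proof.
have [p0 e min] := per_spec x.
wlog ij : i j / i <= j.
  move=> W ip jp eij; case/orP: (leq_total i j) => h; first exact: W.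
  by apply/esym/W.
move=> ip jp eij; case: (ltngtP i j) => // lt; last by lia.
set d := j - i.
set M := 2 ^ m * i.+1.
have iM : i < M by rewrite /M leq_pmull // expn_gt0.
have E1 : iter (M - i) H (iter d H (iter i H x)) = iter d H (iter M H x).
  by rewrite -!iterD; congr iter; lia.
have E2 : iter j H x = iter d H (iter i H x) by rewrite -iterD; congr iter; lia.
have E3 : iter (M - i) H (iter i H x) = iter M H x by rewrite -iterD; congr iter; lia.
have : P (iter d H x) = P x.
  rewrite -(L3 i.+1 x) -/M -(L1 d (L3 i.+1 x)) -/M -E1 -E3.
  by apply: L1; rewrite -E2 eij.
move/(min d); rewrite /d; lia.
Qed.

Definition U x := exists n, P (iter n H x) = ws.

Lemma U_local x y : P x = P y -> U x -> U y.
Proof. by move=> e [n en]; exists n; rewrite -(L1 n e). Qed.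

Lemma U_inv x : U x <-> U (H x).
Proof.
split=> [[n en]|[n en]]; last by exists n.+1; rewrite iterSr.
exists (n + (2 ^ m).-1); rewrite -iterSr -addnS prednK ?expn_gt0 // iterD.
by rewrite (L1 n (L2 x)).
Qed.

Fixpoint cnt n x := if n is k.+1 then cnt k x + (P (iter k H x) == ws) else 0.

Lemma tl_iter n x : tl m (iter n H x) = iter (cnt n x) adding_machine (tl m x).
Proof.
elim: n => [|n IH] //=; rewrite HT IH.
by case: (_ == ws) => /=; rewrite ?addn1 ?addn0.
Qed.

Lemma cnt_local n x y : P x = P y -> cnt n x = cnt n y.
Proof. by move=> e; elim: n => //= n ->; rewrite (L1 n e). Qed.

Lemma cnt_one x : U x -> cnt (per x) x = 1.
Proof.
move=> [n en]; have [p0 e min] := per_spec x.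
set j0 := n %% per x.
have j0p : j0 < per x by rewrite ltn_pmod.
have ej0 : P (iter j0 H x) = ws by rewrite -per_mod.
have uq j : j < per x -> (P (iter j H x) == ws) = (j == j0).
  move=> jp; apply/eqP/eqP => [ej| ->//]; apply: (@per_inj x) => //.
  by rewrite ej ej0.
suff : forall k, k <= per x -> cnt k x = (j0 < k) by move/(_ _ (leqnn _)); rewrite j0p.
elim=> [|k IH] kp //=; rewrite IH ?(ltnW kp) // uq //.
case: (ltngtP j0 k) => h /=; [by rewrite ltnS ltnW | by rewrite ltnS leqNgt h | by rewrite h ltnSn].
Qed.

Lemma block x : U x -> forall z, P z = P x -> forall j,
  P (iter (j * per x) H z) = P z /\
  tl m (iter (j * per x) H z) = iter j adding_machine (tl m z).
Proof.
move=> Ux; have [p0 e min] := per_spec x; have c1 := cnt_one Ux.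
have step z : P z = P x -> P (iter (per x) H z) = P z /\
    tl m (iter (per x) H z) = adding_machine (tl m z).
  move=> ez; split; first by rewrite (L1 _ ez) e ez.
  by rewrite tl_iter (cnt_local _ ez) c1.
move=> z ez; elim=> [|j [IH1 IH2]] //.
rewrite mulSn iterD.
have [s1 s2] := step (iter (j * per x) H z) (etrans IH1 ez).
by rewrite s1 IH1 s2 IH2.
Qed.

End Dyn.


Definition oval (t : cantor_space) K := \sum_(i < K) t i * 2 ^ i.

Lemma valS t K : oval t K.+1 = oval t K + t K * 2 ^ K.
Proof. by rewrite /oval big_ord_recr. Qed.

Lemma oval_lt t K : oval t K < 2 ^ K.
Proof.
elim: K => [|K IH]; first by rewrite /oval big_ord0.
by rewrite valS expnS; case: (t K); rewrite ?mul1n ?mul0n; lia.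
Qed.

Lemma oval_all t K : all id (prefix t K) = ((oval t K).+1 == 2 ^ K).
Proof.
elim: K => [|K IH]; first by rewrite /oval big_ord0 expn0.
rewrite prefixS all_rcons valS IH expnS.
have := oval_lt t K.
have := expn_gt0 2 K.
move: (2 ^ K) (oval t K) => N v N0.
case: (t K) => /=; rewrite ?mul1n ?mul0n => lt.
- by apply/eqP/eqP; lia.
- by apply/esym/eqP; lia.
Qed.
Lemma am_val t K : oval (adding_machine t) K = (oval t K).+1 %% 2 ^ K.
Proof.
elim: K => [|K IH]; first by rewrite /oval big_ord0 expn0 modn1.
rewrite !valS IH.
have lt := oval_lt t K.
have -> : adding_machine t K = if all id (prefix t K) then ~~ t K else t K.
  by rewrite /adding_machine forall_prefix.
rewrite oval_all expnS.
have N0 : 0 < 2 ^ K by rewrite expn_gt0.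
move: (2 ^ K) (oval t K) lt N0 => N v lt N0.
case: eqP => [E|NE].
- rewrite E modnn; case: (t K) => /=; rewrite ?mul1n ?mul0n add0n.
  + by rewrite -addSn E addnn -mul2n modnn.
  + by rewrite addn0 E modn_small //; lia.
- rewrite (modn_small (m := v.+1)); last by lia.
  by case: (t K); rewrite /= ?mul1n ?mul0n modn_small //; lia.
Qed.

Lemma iter_am_val t j K :
  oval (iter j adding_machine t) K = (oval t K + j) %% 2 ^ K.
Proof.
elim: j => [|j IH]; first by rewrite addn0 modn_small ?oval_lt.
rewrite [LHS]/= am_val IH addnS.
by rewrite -[((oval t K + j) %% 2 ^ K).+1]addn1 modnDml addn1.
Qed.

Lemma oval_inj t t' K : oval t K = oval t' K -> prefix t K = prefix t' K.
Proof.
elim: K => [|K IH] // E; rewrite !valS in E.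
have l1 := oval_lt t K; have l2 := oval_lt t' K.
have [eK ev] : t K = t' K /\ oval t K = oval t' K.
  move: E l1 l2; move: (2 ^ K) (oval t K) (oval t' K) => N a b.
  by case: (t K); case: (t' K); rewrite ?mul1n ?mul0n => E l1 l2; split => //; lia.
by rewrite !prefixS (IH ev) eK.
Qed.

Lemma odo_dense t v K : exists j, prefix (iter j adding_machine t) K = prefix v K.
Proof.
exists (oval v K + 2 ^ K - oval t K); apply: oval_inj; rewrite iter_am_val.
have l1 := oval_lt t K; have l2 := oval_lt v K.
have -> : oval t K + (oval v K + 2 ^ K - oval t K) = oval v K + 2 ^ K.
  by move: l1 l2; move: (2 ^ K) (oval t K) (oval v K) => N a b; lia.
by rewrite modnDr modn_small.
Qed.

Lemma odo_free t j : 0 < j -> iter j adding_machine t <> t.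
Proof.
move=> j0 E; have := iter_am_val t j j; rewrite E.
have jN : j < 2 ^ j by rewrite ltn_expl.
have l := oval_lt t j.
move: jN l; move: (2 ^ j) (oval t j) => N v jN l.
case: (ltnP (v + j) N) => h.
- by rewrite modn_small //; lia.
- by rewrite -(subnK h) modnDr modn_small; lia.
Qed.


Lemma cyl_open (x : cantor_space) k : open [set y : cantor_space | prefix y k = prefix x k].
Proof.
elim: k => [|k IH].
  have -> : [set y : cantor_space | prefix y 0 = prefix x 0] = setT.
    by apply/seteqP; split.
  exact: openT.
have -> : [set y : cantor_space | prefix y k.+1 = prefix x k.+1] =
    [set y | prefix y k = prefix x k] `&` (proj k @^-1` [set x k]).
  apply/seteqP; split => y /=.
  - by rewrite !prefixS => /rcons_inj [].
  - by rewrite !prefixS /proj => -[-> ->].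
apply: openI => //.
apply: open_comp; [move=> + _; exact: proj_continuous| apply: discrete_open].
Qed.

Lemma nbhs_cyl (y : cantor_space) (B : set cantor_space) : nbhs y B ->
  exists N, forall z, prefix z N = prefix y N -> B z.
Proof.
pose F := filter_from [set: nat] (fun N => [set z : cantor_space | prefix z N = prefix y N]).
have FF : Filter F.
  apply: filter_from_filter; first by exists 0.
  move=> i j _ _; exists (maxn i j) => // z /= e; split.
  - by apply: prefixW e; rewrite leq_maxl.
  - by apply: prefixW e; rewrite leq_maxr.
suff : F --> y.
  by move=> /(_ B) h /h [N _ hN]; exists N => z; apply: hN.
move/(_ FF): (@cvg_sup cantor_space nat (fun i => Topological.class
    (initial_topology (fun f : cantor_space => f i))) F y) => [_ h].
apply: h => i.
move=> A; rewrite (@nbhsE (initial_topology (fun f : cantor_space => f i))) /=.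
move=> -[W [oW Wy] WA]; case: oW => O _ EO.
exists i.+1 => //= z /prefixP e; apply: WA; rewrite -EO /=.
by rewrite e //; move: Wy; rewrite -EO.
Qed.

Lemma local_open (S : set cantor_space) k :
  (forall x y, prefix x k = prefix y k -> S x -> S y) -> open S.
Proof.
move=> hS; rewrite openE => x Sx.
apply: (@filterS _ _ _ [set y | prefix y k = prefix x k]).
  by move=> y e; apply: hS (esym e) Sx.
by apply: open_nbhs_nbhs; split; [exact: cyl_open|].
Qed.

Lemma local_closed (S : set cantor_space) k :
  (forall x y, prefix x k = prefix y k -> S x -> S y) -> closed S.
Proof.
move=> hS; rewrite -[S]setCK; apply: open_closedC; apply: (@local_open _ k).
by move=> x y e nx sy; apply: nx; exact: hS (esym e) sy.
Qed.

Lemma part2 (H : cantor_space -> cantor_space) (m : nat) (ws : seq bool) :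
  auto_like H -> size ws = m ->
  (forall x, tl m (H x) = if prefix x m == ws then adding_machine (tl m x) else tl m x) ->
  (forall n : nat, (0 < n)%N -> exists x, iter n H x <> x) /\
   exists U : set cantor_space,
     open U /\ closed U /\
     (forall x, U x <-> U (H x)) /\
     (forall x, U x -> U `<=` closure (zorbit H x)) /\
     exists n0 : nat, forall x, ~ U x ->
       exists k : nat, (k <= n0)%N /\ has_period H x (2 ^ k).
Proof.
move=> HA Hws HT.
have Ul x y : prefix x m = prefix y m -> U H m ws x -> U H m ws y.
  exact: U_local.
split.
  move=> n n0.
  pose x0 : cantor_space := fun i => nth false ws i.
  have e0 : prefix x0 m = ws by rewrite /Defs.prefix -Hws mkseq_nth.
  exists x0 => E.
  have Ux0 : U H m ws x0 by exists 0.
  have [p0 ep min] := per_spec m HA x0.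
  have r0 : n %% per m HA x0 = 0.
    case r: (n %% per m HA x0) => [//|r'].
    have := min r'.+1 (ltn0Sn _); rewrite -r -per_mod E => /(_ erefl).
    by have := ltn_pmod n p0; rewrite r; lia.
  have q0 : 0 < n %/ per m HA x0.
    by rewrite divn_gt0 //; apply: min => //; rewrite E.
  have [_ t] := block HA Hws HT Ux0 erefl (n %/ per m HA x0).
  have : iter (n %/ per m HA x0) adding_machine (tl m x0) = tl m x0.
    by rewrite -t divnK ?E // /dvdn r0.
  exact: odo_free q0.
exists (U H m ws); split; first exact: (local_open (k := m)).
split; first exact: (local_closed (k := m)).
split; first exact: U_inv.
split.
  move=> x Ux y Uy B /nbhs_cyl [N0 hN].
  set N := maxn N0 m.
  have [n en] : exists n, prefix (iter n H x) N = prefix y N.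
    case: Ux => a ea; case: (Uy) => b eb.
    set n1 := a + (2 ^ m * b - b).
    have hb : b <= 2 ^ m * b by rewrite leq_pmull ?expn_gt0.
    have e1 : prefix (iter n1 H x) m = prefix y m.
      rewrite /n1 addnC iterD (L1 HA _ (etrans ea (esym eb))) -iterD subnK //.
      exact: L3.
    set x' := iter n1 H x.
    have Ux' : U H m ws x' := Ul _ _ (esym e1) Uy.
    have [j ej] := odo_dense (tl m x') (tl m y) (N - m).
    have [b1 b2] := block HA Hws HT Ux' erefl j.
    exists (j * per m HA x' + n1); rewrite iterD -/x'.
    apply: (@prefixW _ _ (m + (N - m))); first by rewrite /N; lia.
    by rewrite !prefix_cat b1 e1 b2 ej.
  exists (iter n H x); split; first by exists n; left.
  by apply: hN; apply: prefixW en; rewrite leq_maxl.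
exists m => x nU.
have [p0 ep min] := per_spec m HA x.
have /(dvdn_pfactor _ _ (isT : prime 2)) [k km ek] := per_dvd HA Hws x.
have c0 n : cnt H m ws n x = 0.
  elim: n => //= n ->; case: eqP => // E; exfalso; apply: nU; by exists n.
have fx n : prefix (iter n H x) m = prefix x m -> iter n H x = x.
  move=> e; apply: funext => i; case: (ltnP i m) => him.
  - by move/prefixP: e; apply.
  - have := congr1 (fun f => f (i - m)) (tl_iter HT n x).
    by rewrite c0 /tl /= subnKC.
exists k; split => //; rewrite -ek; split => //; split; first exact: fx.
move=> j /andP[j0 jp] E; have := min j j0; rewrite E => /(_ erefl).
by rewrite leqNgt jp.
Qed.


Lemma all_id_nseq (s : seq bool) : all id s = (s == nseq (size s) true).
Proof. by elim: s => //= b s ->; rewrite eqseq_cons; case: b. Qed.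

Lemma glue (g : seq bool -> seq bool) m : is_tree_aut g ->
  (forall (w : cantor_space) i, m <= i -> bd_act g w i = w i) ->
  auto_like (adding_machine \o bd_act g) /\ exists ws, size ws = m /\
  forall x, tl m ((adding_machine \o bd_act g) x) =
     if prefix x m == ws then adding_machine (tl m x) else tl m x.
Proof.
move=> ga hfix; split; first exact: auto_comp (bd_act_auto ga) am_auto.
have [child sz] := tree_aut_struct ga.
case: (ga) => -[g' gK g'K] _.
exists (g' (nseq m true)); split.
  by rewrite -sz g'K size_nseq.
move=> x; apply: funext => k; rewrite /tl /= /adding_machine forall_prefix prefix_cat all_cat.
have e1 : prefix (tl m (bd_act g x)) k = prefix (tl m x) k.
  by apply/prefixP => i _; rewrite /tl hfix // leq_addr.
have e2 : all id (prefix (bd_act g x) m) = (prefix x m == g' (nseq m true)).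
  rewrite bd_act_prefix // all_id_nseq sz size_prefix.
  apply/eqP/eqP => [<-|->]; [by rewrite gK | by rewrite g'K].
rewrite e1 e2 hfix ?leq_addr //.
case: (_ == _) => //=.
by have := forall_prefix (tl m x) k; rewrite /tl => ->.
Qed.


Definition bits K k := mkseq (fun i => odd (k %/ 2 ^ (K - i.+1))) K.
Definition rval (w : seq bool) : nat := foldl (fun a (b : bool) => a.*2 + b) 0 w.

Lemma size_bits K k : size (bits K k) = K.
Proof. by rewrite size_mkseq. Qed.

Lemma bitsS K k : bits K.+1 k = rcons (bits K k./2) (odd k).
Proof.
rewrite /bits mkseqS subnn expn0 divn1; congr rcons.
rewrite /mkseq; apply/eq_in_map => i; rewrite mem_iota add0n => /andP[_ lt].
have -> : K.+1 - i.+1 = (K - i.+1).+1 by lia.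
by rewrite expnS divnMA divn2.
Qed.

Lemma rval_rcons w b : rval (rcons w b) = (rval w).*2 + b.
Proof. by rewrite /rval -cats1 foldl_cat. Qed.

Lemma rval_lt w : rval w < 2 ^ size w.
Proof.
elim/last_ind: w => [|w b IH] //; rewrite rval_rcons size_rcons expnS.
by move: IH; move: (2 ^ size w) (rval w) => N r; case: b => /=; rewrite -muln2; lia.
Qed.

Lemma bits_rval w : bits (size w) (rval w) = w.
Proof.
elim/last_ind: w => [|w b IH] //; rewrite rval_rcons size_rcons bitsS.
by rewrite addnC half_bit_double oddD odd_double /= IH; case: b.
Qed.

Lemma bits_inj K k1 k2 : k1 < 2 ^ K -> k2 < 2 ^ K -> bits K k1 = bits K k2 -> k1 = k2.
Proof.
elim: K k1 k2 => [|K IH] k1 k2.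
  by rewrite expn0; case: k1 => //; case: k2.
rewrite !bitsS expnS mul2n => l1 l2 /rcons_inj [/IH e1 e2].
rewrite -(odd_double_half k1) -(odd_double_half k2) e2 e1 //.
- by rewrite ltn_half_double.
- by rewrite ltn_half_double.
Qed.

Lemma rval_bits K k : k < 2 ^ K -> rval (bits K k) = k.
Proof.
move=> lt; apply: (@bits_inj K) => //.
  by have := rval_lt (bits K k); rewrite size_bits.
by have := bits_rval (bits K k); rewrite size_bits.
Qed.

Local Open Scope ring_scope.

Section Digits.
Variable R : realType.
Implicit Types x y : R.

Definition D (K : nat) x : nat := Num.truncn (x * 2 ^+ K).
Definition phi x : cantor_space := fun i => odd (D i.+1 x).

Lemma D_eq x K (n : nat) : 0 <= x -> (D K x = n) <-> (n%:R <= x * 2 ^+ K < n.+1%:R).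
Proof.
move=> x0; split => [<-|/truncn_def //]; apply: truncn_itv.
by rewrite mulr_ge0 // exprn_ge0.
Qed.

Lemma D_half x a : 0 <= x -> D a x = (D a.+1 x)./2.
Proof.
move=> x0; set n := D a.+1 x.
have /andP[l u] : n%:R <= x * 2 ^+ a.+1 < n.+1%:R by apply/D_eq.
apply/D_eq => //.
have e : x * 2 ^+ a.+1 = (x * 2 ^+ a) * 2 by rewrite exprS mulrCA mulrC.
rewrite e in l u.
have hn := odd_double_half n.
apply/andP; split.
- rewrite -(ler_pM2r (_ : 0 < 2 :> R)) //; apply: le_trans l.
  rewrite -natrM ler_nat muln2; lia.
- rewrite -(ltr_pM2r (_ : 0 < 2 :> R)) //; apply: (lt_le_trans u).
  rewrite -natrM ler_nat muln2; lia.
Qed.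

Lemma D_div x a b : 0 <= x -> D a x = (D (a + b) x %/ 2 ^ b)%N.
Proof.
move=> x0; elim: b => [|b IH]; first by rewrite addn0 expn0 divn1.
by rewrite IH addnS (D_half _ x0) -divn2 -divnMA expnS.
Qed.

Lemma prefix_phi x K : 0 <= x -> prefix (phi x) K = bits K (D K x).
Proof.
move=> x0; rewrite /bits /Defs.prefix /mkseq; apply/eq_in_map => i.
rewrite mem_iota add0n => /andP[_ lt]; rewrite /phi (D_div _ (K - i.+1) x0).
by rewrite subnKC.
Qed.

Lemma D_lt x K : 0 <= x < 1 -> (D K x < 2 ^ K)%N.
Proof.
move=> /andP[x0 x1]; rewrite /D truncn_lt_nat ?mulr_ge0 ?exprn_ge0 //.
by rewrite natrX gtr_pMl // exprn_gt0.
Qed.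

Lemma D_shift x y K (a b : nat) : 0 <= x -> 0 <= y ->
  x * 2 ^+ K + a%:R = y * 2 ^+ K + b%:R -> (D K x + a = D K y + b)%N.
Proof.
move=> x0 y0 e.
have hx : 0 <= x * 2 ^+ K by rewrite mulr_ge0 // exprn_ge0.
have hy : 0 <= y * 2 ^+ K by rewrite mulr_ge0 // exprn_ge0.
rewrite /D -[in LHS](@natrK R a) -[in RHS](@natrK R b).
rewrite addnC -truncnD ?natr_nat ?nnegrE // addnC -truncnD ?natr_nat ?nnegrE //.
by rewrite addrC e addrC.
Qed.

End Digits.

Local Open Scope ring_scope.

Section Conj.
Variable R : realType.
Local Notation phi := (@phi R).
Local Notation D := (@D R).

Lemma pow2_gt0 n : 0 < (2 : R) ^+ n.
Proof. exact: exprn_gt0. Qed.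

Lemma odd_pow2 e : (0 < e)%N -> odd (2 ^ e) = false.
Proof. by move=> e0; rewrite oddX orbF; case: e e0. Qed.

Lemma rot_digits (m : nat) (x : R) (j : nat) : 0 <= x < 1 -> (j < 2 ^ m)%N ->
  let y := x + (j%:R - (D m x)%:R) / (2 ^ m)%N%:R in
  0 <= y < 1 /\ prefix (phi y) m = bits m j /\
  forall i, (m <= i)%N -> phi y i = phi x i.
Proof.
move=> /andP[x0 x1] jlt y.
set k := D m x.
have /andP[l u] : k%:R <= x * 2 ^+ m < k.+1%:R by apply/D_eq.
have P0 := pow2_gt0 m.
have ey : y * 2 ^+ m = x * 2 ^+ m + j%:R - k%:R.
  by rewrite /y natrX; field; rewrite lt0r_neq0.
have yl : j%:R <= y * 2 ^+ m by rewrite ey; lra.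
have yu : y * 2 ^+ m < j.+1%:R by rewrite ey -natr1 -[k.+1]addn1 natrD in u *; lra.
have y0 : 0 <= y by rewrite -(pmulr_lge0 _ P0); apply: le_trans yl.
have y1 : y < 1.
  rewrite -(ltr_pM2r P0) mul1r; apply: (lt_le_trans yu).
  by rewrite -natrX ler_nat.
have Dy : D m y = j by apply/D_eq => //; rewrite yl yu.
split; first by rewrite y0 y1.
split; first by rewrite prefix_phi // Dy.
move=> i mi; rewrite /phi.
set e := (i.+1 - m)%N.
have e0 : (0 < e)%N by rewrite /e subn_gt0.
have ie : i.+1 = (m + e)%N by rewrite /e subnKC // ltnW.
have : (D i.+1 y + k * 2 ^ e = D i.+1 x + j * 2 ^ e)%N.
  apply: D_shift => //.
  rewrite ie exprD !natrM !natrX mulrA ey; ring.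
move/(congr1 odd); rewrite !oddD !oddM odd_pow2 // !andbF !addbF.
by [].
Qed.

Lemma mulP_le (P a b : R) : 0 < P -> a <= b -> a * P <= b * P.
Proof. by move=> P0 h; rewrite ler_pM2r. Qed.
Lemma mulP_lt (P a b : R) : 0 < P -> a < b -> a * P < b * P.
Proof. by move=> P0 h; rewrite ltr_pM2r. Qed.

Lemma vNK_level_D (y : R) n : 0 <= y -> vNK_level y n -> D n y = (2 ^ n - 2)%N.
Proof.
move=> y0 [n1 [l u]]; case: n n1 l u => // n _ /= l u.
have P0 := pow2_gt0 n.
have e2 : (2:R) ^+ n.+1 = 2 * 2 ^+ n by rewrite exprS.
have Pge1 : (1 <= 2 ^ n)%N by rewrite expn_gt0.
apply/D_eq => //.
have -> : (2 ^ n.+1 - 2)%N.+1 = (2 ^ n.+1 - 1)%N by rewrite expnS; lia.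
rewrite !natrB ?expnS; try lia.
rewrite natrM natrX.
have l' := mulP_le (pow2_gt0 n.+1) l.
have u' := mulP_lt (pow2_gt0 n.+1) u.
have E1 : (1 - ((2 : R) ^+ n)^-1) * 2 ^+ n.+1 = 2 * 2 ^+ n - 2.
  by rewrite e2; field; rewrite lt0r_neq0.
have E2 : (1 - ((2 : R) ^+ n.+1)^-1) * 2 ^+ n.+1 = 2 * 2 ^+ n - 1.
  by rewrite e2; field; rewrite lt0r_neq0.
rewrite E1 in l'; rewrite E2 in u'.
apply/andP; split; rewrite -e2; lra.
Qed.

Lemma vNK_level_ex (y : R) : 0 <= y < 1 -> exists n, vNK_level y n.
Proof.
move=> /andP[y0 y1].
have ex : exists n, y < 1 - (2%:R : R) ^- n.
  set M := Num.truncn ((1 - y)^-1).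
  exists M.+1.
  have h1 : (1 - y)^-1 < M.+1%:R := truncnS_gt _.
  have h2 : (M.+1%:R : R) <= 2 ^+ M.+1 by rewrite -natrX ler_nat ltnW // ltn_expl.
  have hy : 0 < 1 - y by lra.
  have : (1 - y)^-1 < 2 ^+ M.+1 by apply: lt_le_trans h2.
  rewrite invf_plt ?posrE ?exprn_gt0 //.
  lra.
case: (ex_minnP ex) => n hn min.
exists n; split.
  by case: n hn {min} => //; rewrite expr0 invr1 subrr ltNge y0.
split => //; case: n hn min => [|n] hn min /=.
  by move: hn; rewrite expr0 invr1 subrr ltNge y0.
by rewrite leNgt; apply/negP => h; have := min n h; rewrite ltnn.
Qed.

Lemma vNK_level_uniq (y : R) n1 n2 : vNK_level y n1 -> vNK_level y n2 -> n1 = n2.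
Proof.
wlog lt : n1 n2 / (n1 <= n2)%N.
  move=> W h1 h2; case/orP: (leq_total n1 n2) => h; first exact: W.
  by apply/esym/W.
move=> [_ [_ u1]] [h2 [l2 _]].
case: (ltngtP n1 n2) lt => // lt _.
have : (2 : R) ^+ n1 <= 2 ^+ n2.-1 by rewrite ler_eXn2l // ?ltr1n; lia.
rewrite -lef_pV2 ?posrE ?exprn_gt0 // => h.
exfalso; move: u1 l2 h; move: (2 ^- n1) (2 ^- n2.-1) => a b; clear; lra.
Qed.

Lemma vNK_indexE (y : R) n : vNK_level y n -> vNK_index y = n.
Proof.
move=> h; apply: xget_unique => // k hk; exact: vNK_level_uniq hk h.
Qed.

Lemma nseqSr k (b : bool) : nseq k.+1 b = rcons (nseq k b) b.
Proof. by elim: k => //= k IH; rewrite IH. Qed.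

Lemma rval_nseq_true k : rval (nseq k true) = (2 ^ k - 1)%N.
Proof.
elim: k => // k IH; rewrite nseqSr rval_rcons IH expnS /= -muln2.
have := expn_gt0 2 k; move: (2 ^ k)%N => N; lia.
Qed.

Lemma rval_nseq_false k : rval (nseq k false) = 0%N.
Proof. by elim: k => // k IH; rewrite nseqSr rval_rcons IH. Qed.

Lemma bits_y ns : bits ns.+1 (2 ^ ns.+1 - 2) = rcons (nseq ns true) false.
Proof.
have := bits_rval (rcons (nseq ns true) false).
rewrite size_rcons size_nseq rval_rcons rval_nseq_true /=.
have -> : ((2 ^ ns - 1).*2 + false)%N = (2 ^ ns.+1 - 2)%N.
  rewrite expnS -muln2 /=; have := expn_gt0 2 ns; move: (2 ^ ns)%N => N; lia.
by [].
Qed.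

Lemma bits_z ns : bits ns.+1 1 = rcons (nseq ns false) true.
Proof.
have := bits_rval (rcons (nseq ns false) true).
by rewrite size_rcons size_nseq rval_rcons rval_nseq_false.
Qed.

Lemma vNK_conj (y : R) : 0 <= y < 1 ->
  0 <= vNK y < 1 /\ phi (vNK y) = adding_machine (phi y).
Proof.
move=> hy; have /andP[y0 y1] := hy.
have [n ln] := vNK_level_ex hy.
have idx := vNK_indexE ln.
have Dy := vNK_level_D y0 ln.
case: ln => n1 _.
case: n n1 Dy idx => // ns _ Dy idx.
have /andP[l u] : (2 ^ ns.+1 - 2)%N%:R <= y * 2 ^+ ns.+1 < (2 ^ ns.+1 - 2)%N.+1%:R.
  by apply/D_eq.
have P0 := pow2_gt0 ns.+1.
have g2 : (2 <= 2 ^ ns.+1)%N by rewrite expnS; have := expn_gt0 2 ns; lia.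
have E : (2 ^ ns.+1 - 2)%N%:R = (2:R) ^+ ns.+1 - 2 by rewrite natrB // natrX.
have E' : (2 ^ ns.+1 - 2)%N.+1%:R = (2:R) ^+ ns.+1 - 1.
  have -> : (2 ^ ns.+1 - 2)%N.+1 = (2 ^ ns.+1 - 1)%N by lia.
  by rewrite natrB ?natrX //; lia.
rewrite E in l; rewrite E' in u.
have P2 : (2 : R) <= 2 ^+ ns.+1.
  by rewrite -natrX ler_nat.
set z := vNK y.
have ez : z * 2 ^+ ns.+1 = y * 2 ^+ ns.+1 - 2 ^+ ns.+1 + 3.
  by rewrite /z /vNK idx; field; rewrite lt0r_neq0.
have zl : 1 <= z * 2 ^+ ns.+1 by rewrite ez; lra.
have zu : z * 2 ^+ ns.+1 < 2 by rewrite ez; lra.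
have z0 : 0 <= z by rewrite -(pmulr_lge0 _ P0); lra.
have z1 : z < 1 by rewrite -(ltr_pM2r P0) mul1r; lra.
have Dz : D ns.+1 z = 1%N by apply/D_eq => //; rewrite zl /=; lra.
have py : prefix (phi y) ns.+1 = rcons (nseq ns true) false.
  by rewrite prefix_phi // Dy bits_y.
have pz : prefix (phi z) ns.+1 = rcons (nseq ns false) true.
  by rewrite prefix_phi // Dz bits_z.
have dig (x : R) w j : prefix (phi x) ns.+1 = w -> (j < ns.+1)%N ->
    phi x j = nth false w j.
  by move=> <- jl; rewrite nth_mkseq.
split; first by rewrite z0 z1.
apply: funext => i; rewrite /adding_machine.
case: (ltngtP i ns) => hi.
- have -> : [forall j : 'I_i, phi y j].
  apply/forallP => j; rewrite (dig _ _ j py); last by apply: (ltn_trans (ltn_ord j)); lia.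
    rewrite nth_rcons size_nseq.
    have jn : (j < ns)%N by apply: ltn_trans hi.
    by rewrite jn nth_nseq jn.
  have ilt : (i < ns.+1)%N by apply: ltnW.
  by rewrite (dig _ _ i py ilt) (dig _ _ i pz ilt) !nth_rcons !size_nseq hi !nth_nseq hi.
- have -> : [forall j : 'I_i, phi y j] = false.
    apply/negbTE/forallP => h; have := h (Ordinal hi).
    by rewrite (dig _ _ ns py) // nth_rcons size_nseq ltnn eqxx.
  rewrite /phi.
  set e := (i - ns)%N.
  have e0 : (0 < e)%N by rewrite /e subn_gt0.
  have ie : i.+1 = (ns.+1 + e)%N by rewrite /e; lia.
  have : (D i.+1 z + 2 ^ i.+1 = D i.+1 y + 3 * 2 ^ e)%N.
    apply: D_shift => //.
    rewrite natrM !natrX ie exprD mulrA ez; ring.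
  move/(congr1 odd); rewrite !oddD !odd_pow2 // !addbF.
  by [].
- rewrite hi.
  have -> : [forall j : 'I_ns, phi y j].
    apply/forallP => j; rewrite (dig _ _ j py); last exact: ltnW (ltn_ord j).
    by rewrite nth_rcons size_nseq ltn_ord nth_nseq ltn_ord.
  by rewrite (dig _ _ ns py) // (dig _ _ ns pz) // !nth_rcons !size_nseq ltnn eqxx.
Qed.

End Conj.

Local Open Scope ring_scope.

Section Meas.
Variable R : realType.
Local Notation phi := (@phi R).
Local Notation D := (@D R).

Lemma cyl_pre (w : seq bool) :
  `[0, 1[%classic `&` phi @^-1` (cylinder w) =
  `[(rval w)%:R / 2 ^+ size w, (rval w).+1%:R / 2 ^+ size w[%classic.
Proof.
have P0 := pow2_gt0 R (size w).
have kl : (rval w < 2 ^ size w)%N := rval_lt w.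
apply/seteqP; split => x /=.
- rewrite !in_itv /= /cylinder => -[/andP[x0 x1]].
  rewrite /= prefix_phi // => e.
  have Dk : D (size w) x = rval w.
    have Dlt : (D (size w) x < 2 ^ size w)%N by apply: D_lt; rewrite x0 x1.
    by have := congr1 rval e; rewrite rval_bits.
  have /andP[l u] := (D_eq _ _ x0).1 Dk.
  by rewrite ler_pdivrMr // ltr_pdivlMr // l u.
- rewrite !in_itv /= /cylinder => /andP[l u].
  rewrite ler_pdivrMr // in l; rewrite ltr_pdivlMr // in u.
  have x0 : 0 <= x.
    by rewrite -(pmulr_lge0 _ P0); apply: le_trans l.
  have x1 : x < 1.
    rewrite -(ltr_pM2r P0) mul1r; apply: (lt_le_trans u).
    by rewrite -natrX ler_nat.
  split; first by rewrite x0 x1.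
  rewrite /= prefix_phi //.
  have -> : D (size w) x = rval w by apply/D_eq => //; rewrite l u.
  exact: bits_rval.
Qed.

Lemma phi_mfun : measurable_fun (`[0, 1[%classic : set R) (phi : R -> bdT).
Proof.
apply: (@measurability _ _ _ bdT _ _ cylinders) => //.
move=> _ [_ [w _ <-] <-]; rewrite cyl_pre; exact: measurable_itv.
Qed.

End Meas.

Section Nu.
Variable R : realType.
Let f : R -> bdT := @phi R.
Let mf : measurable_fun (`[0, 1[%classic : set R) f := @phi_mfun R.

Definition nu (B : set bdT) : \bar R :=
  (@lebesgue_measure R) (`[0, 1[%classic `&` (@phi R) @^-1` B).

Let nu0 : nu set0 = 0%E.
Proof. by rewrite /nu preimage_set0 setI0 measure0. Qed.

Let nu_ge0 B : (0 <= nu B)%E.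
Proof. exact: measure_ge0. Qed.

Let nu_sigma : semi_sigma_additive nu.
Proof.
move=> F mF tF mUF; rewrite /nu preimage_bigcup setI_bigcupr.
have mI : measurable (`[0, 1[%classic : set R) by exact: measurable_itv.
apply: measure_semi_sigma_additive.
- by move=> n; apply: mf.
- apply/trivIsetP => i j _ _ ij; rewrite setIACA setIid -preimage_setI.
  by move/trivIsetP : tF => /(_ _ _ _ _ ij) ->//; rewrite preimage_set0 setI0.
- by rewrite -setI_bigcupr -preimage_bigcup; apply: mf.
Qed.

HB.instance Definition _ := isMeasure.Build _ _ _ nu nu0 nu_ge0 nu_sigma.

End Nu.


Lemma cyl_inter (u v : seq bool) :
  cylinder u `&` cylinder v = set0 \/ cylinder u `&` cylinder v = cylinder u \/
  cylinder u `&` cylinder v = cylinder v.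
Proof.
have [[x [xu xv]]|nex] := pselect (exists x, cylinder u x /\ cylinder v x); last first.
  by left; apply/seteqP; split => // y [yu yv]; apply: nex; exists y.
right; rewrite /cylinder /= in xu xv.
case/orP: (leq_total (size u) (size v)) => h.
- right; apply: setIidr => y; rewrite /cylinder /= => yv.
  by rewrite -[RHS]xu; apply: (prefixW h); rewrite yv xv.
- left; apply: setIidl => y; rewrite /cylinder /= => yu.
  by rewrite -[RHS]xv; apply: (prefixW h); rewrite yu xu.
Qed.

Section Match.
Variable R : realType.
Local Notation phi := (@phi R).

Lemma leb_itv (a b : R) : a < b -> (@lebesgue_measure R) `[a, b[%classic = (b - a)%:E.
Proof. by move=> ab; rewrite lebesgue_measure_itv /= lte_fin ab EFinB. Qed.

Lemma measure_match (mu : {measure set bdT -> \bar R}) :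
  is_bernoulli_measure mu -> forall B : set bdT, measurable B ->
   measurable (`[0, 1[%classic `&` phi @^-1` B) /\
   (@lebesgue_measure R) (`[0, 1[%classic `&` phi @^-1` B) = mu B.
Proof.
move=> hmu B mB.
have mI : measurable (`[0, 1[%classic : set R) by exact: measurable_itv.
split; first exact: phi_mfun.
pose G : set (set bdT) := [set C | C = set0 \/ cylinders C].
have mG : @measurable _ bdT = <<s G >>.
  apply/seteqP; split.
  - apply: sub_smallest2r; first exact: smallest_sigma_algebra.
    by move=> C cC; right.
  - apply: smallest_sub; first exact: smallest_sigma_algebra.
    move=> C [->|cC]; first exact: measurable0.
    exact: sub_sigma_algebra.
have setIG : setI_closed G.
  move=> A1 B1 [->|[u _ <-]] [->|[v _ <-]]; rewrite ?set0I ?setI0; try by left.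
  case: (cyl_inter u v) => [->|[->|->]]; [by left|by right; exists u|by right; exists v].
have Gg : forall k : nat, G setT.
  move=> _; right; exists [::] => //; apply/seteqP; split => // x _; by [].
have cover : \bigcup_(k : nat) (setT : set bdT) = setT.
  by rewrite bigcup_const //; exists 0%N.
have m1m2 : forall A, G A -> nu R A = mu A.
  move=> A [->|[w _ <-]]; first by rewrite !measure0.
  rewrite /nu cyl_pre hmu leb_itv; last first.
    by rewrite ltr_pM2r ?invr_gt0 ?pow2_gt0 // ltr_nat.
  congr EFin; field; rewrite lt0r_neq0 //; exact: pow2_gt0.
have m1goo : forall k : nat, (nu R setT < +oo)%E.
  move=> _; rewrite /nu preimage_setT setIT.
  by rewrite leb_itv // ltry.
exact: (measure_unique G (fun _ => setT) mG setIG Gg cover (nu R) mu m1m2 m1goo B mB).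
Qed.

End Match.

Local Open Scope ring_scope.

Lemma bits_rval_size w K : size w = K -> bits K (rval w) = w.
Proof. by move=> <-; exact: bits_rval. Qed.

Lemma phi_inj (R : realType) (x y : R) : `[0, 1[%classic x -> `[0, 1[%classic y ->
  phi x = phi y -> x = y.
Proof.
rewrite /= !in_itv /= => hx hy e.
have /andP[x0 x1] := hx; have /andP[y0 y1] := hy.
have hD K : D K x = D K y.
  have := congr1 (fun z => prefix z K) e; rewrite /= !prefix_phi //.
  by apply: bits_inj; apply: D_lt.
apply/eqP; apply/negPn/negP => nxy.
have d0 : 0 < `|x - y| by rewrite normr_gt0 subr_eq0.
set M := Num.truncn (`|x - y|^-1).
have h1 : `|x - y|^-1 < M.+1%:R := truncnS_gt _.
have h2 : (M.+1%:R : R) <= 2 ^+ M.+1 by rewrite -natrX ler_nat ltnW // ltn_expl.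
have P0 := pow2_gt0 R M.+1.
have h3 : 1 < 2 ^+ M.+1 * `|x - y|.
  have := lt_le_trans h1 h2; move/(mulP_lt d0); rewrite mulVf ?lt0r_neq0 //.
have /andP[lx ux] := (D_eq _ _ x0).1 (erefl (D M.+1 x)).
have /andP[ly uy] := (D_eq _ _ y0).1 (erefl (D M.+1 y)).
rewrite hD in lx ux.
have bnd : `|x * 2 ^+ M.+1 - y * 2 ^+ M.+1| < 1.
  rewrite ltr_norml; apply/andP; split; rewrite -natr1 in ux uy; lra.
move: bnd; rewrite -mulrBl normrM (gtr0_norm P0) mulrC; lra.
Qed.

Theorem theorem1p8 (R : realType) (mu : {measure set bdT -> \bar R})
  (g : seq bool -> seq bool) (m : nat) :
  is_bernoulli_measure mu ->
  is_tree_aut g ->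
  (1 <= m)%N ->
  (forall (w : cantor_space) (i : nat), (m <= i)%N -> bd_act g w i = w i) ->
  let h := adding_machine \o bd_act g in
  (* (1) *)
  (exists (pi : {perm 'I_(2 ^ m)}) (phi : R -> cantor_space),
      (forall x y, `[0, 1[%classic x -> `[0, 1[%classic y -> phi x = phi y -> x = y) /\
      (forall B : set bdT, measurable B ->
         measurable (`[0, 1[%classic `&` phi @^-1` B) /\
         (@lebesgue_measure R) (`[0, 1[%classic `&` phi @^-1` B) = mu B) /\
      (forall x, `[0, 1[%classic x -> phi (rot_odometer pi x) = h (phi x))) /\
  (* (2) *)
  ((forall n : nat, (0 < n)%N -> exists x, iter n h x <> x) /\
   exists U : set cantor_space,
     open U /\ closed U /\
     (forall x, U x <-> U (h x)) /\
     (forall x, U x -> U `<=` closure (zorbit h x)) /\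
     exists n0 : nat, forall x, ~ U x ->
       exists k : nat, (k <= n0)%N /\ has_period h x (2 ^ k)).
Proof.
move=> hmu ga m1 hfix h.
have [HA [ws [Hws HT]]] := glue ga hfix.
split; last exact: (part2 HA Hws HT).
have [child sz] := tree_aut_struct ga.
have ginj : injective g by case: ga => -[g' gK _] _; exact: can_inj gK.
have piLt : forall k : 'I_(2 ^ m), (rval (g (bits m k)) < 2 ^ m)%N.
  by move=> k; have := rval_lt (g (bits m k)); rewrite sz size_bits.
pose f := fun k : 'I_(2 ^ m) => Ordinal (piLt k).
have finj : injective f.
  move=> k1 k2 e; have {e} /= e := congr1 val e.
  have : g (bits m k1) = g (bits m k2).
    by rewrite -(bits_rval (g (bits m k1))) -(bits_rval (g (bits m k2))) !sz !size_bits e.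
  move/ginj/bits_inj => e'; apply: val_inj; apply: e'; exact: ltn_ord.
exists (perm finj), (@phi R).
split; first exact: phi_inj.
split; first exact: measure_match.
move=> x hx; have /andP[x0 x1] : 0 <= x < 1 by move: hx; rewrite /= in_itv.
rewrite /rot_odometer /rot_pi.
have -> : Num.truncn (x * (2 ^ m)%:R) = D m x by rewrite /D natrX.
have kl : (D m x < 2 ^ m)%N by apply: D_lt; rewrite x0 x1.
case: insubP => [i _ ei|]; last by rewrite kl.
rewrite permE /= ei.
have hxx : 0 <= x < 1 by rewrite x0 x1.
have jl : (rval (g (bits m (D m x))) < 2 ^ m)%N by rewrite -ei; exact: piLt.
have [hy [py ty]] := rot_digits hxx jl.
set y := x + _.
have ey : phi y = bd_act g (phi x).
  apply: funext => i0; case: (ltnP i0 m) => hi.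
  - have := congr1 (fun s => nth false s i0) py.
    rewrite /= nth_mkseq // => ->.
    rewrite bits_rval_size; last by rewrite sz size_bits.
    rewrite -prefix_phi // -bd_act_prefix //.
    by rewrite nth_mkseq.
  - by rewrite ty // hfix.
have [_ ->] := vNK_conj hy.
by rewrite ey.
Qed.
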